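(* Let $\alpha,\beta,p\in\mathbb{C}$ be constants and let $h,g:\mathbb{Z}^2\to\mathbb{C}$ satisfy $\widehat{h}-\widetilde{h}=\widetilde{\widetilde{g}}-g$ and $(h+\widetilde g)g=\beta^2-\alpha^2$. Let $\varphi$ solve the Lax pair $$\widetilde{\widetilde{\varphi}}+h\,\widetilde{\varphi}+\alpha^2\varphi=p^2\varphi,\qquad \widehat{\varphi}=\widetilde{\varphi}-g\,\varphi,$$ and let $\varphi^*$ solve the adjoint Lax pair $$\widetilde{\widetilde{\varphi^*}}-h\,\widetilde{\varphi^*}+\alpha^2\varphi^*=p^2\varphi^*,\qquad \widehat{\varphi^*}=\widetilde{\varphi^*}+g\,\varphi^* .$$ Then there is a constant $\rho$ such that for all $n,m\in\mathbb{Z}$ $$\varphi\,\widetilde{\varphi^*}+\varphi^*\widetilde{\varphi}=\varphi\,\widehat{\varphi^*}+\varphi^*\widehat{\varphi}=(-1)^{n+m}\rho\,s^{2n}t^{2m},$$ where $s^2=\alpha^2-p^2$, $t^2=\beta^2-p^2$. If $\varphi^*$ is proportional to $(-1)^{n+m}\varphi$, then $\rho=0$.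
   Context: Shift notation: for a function $f$ on $\mathbb{Z}^2$ (variables $n,m$), $\widetilde f(n,m)=f(n+1,m)$, $\widehat f(n,m)=f(n,m+1)$, and combined accents denote composed shifts. *)

(* Defs.v *)
(* The complex field is represented by an arbitrary
   numClosedFieldType C (which includes algC and MathComp-Analysis's complexes). *)
From HB Require Import structures.
From mathcomp Require Export all_boot all_order all_algebra.
Set Implicit Arguments.
Unset Strict Implicit.
Unset Printing Implicit Defensive.
Export Order.TTheory GRing.Theory Num.Theory.

(* Main.v *)
Require Import Defs.
From mathcomp Require Import all_boot all_order all_algebra.
From mathcomp Require Import ring.
Import Order.TTheory GRing.Theory Num.Theory.
Local Open Scope ring_scope.

Lemma geom_int (C : fieldType) (f : int -> C) (a : C) :
  a != 0 -> (forall n, f (n + 1) = a * f n) -> forall n, f n = a ^ n * f 0.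
Proof.
move=> a0 Hf.
have ua : a \is a GRing.unit by rewrite unitfE.
pose F n := a ^ (- n) * f n.
have HF : forall n, F (n + 1) = F n.
  move=> n; rewrite /F Hf mulrA; congr (_ * _).
  by rewrite -{2}(expr1z a) -exprzDr // opprD addrNK.
have HP : forall k : nat, F k = F 0.
  elim=> [//|k IH]; rewrite -IH -(HF k); congr F; by rewrite -addn1 PoszD.
have HN : forall k : nat, F (- k%:Z) = F 0.
  elim=> [//|k IH]; rewrite -IH -(HF (- k.+1%:Z)).
  congr F; by rewrite -addn1 PoszD opprD -addrA addNr addr0.
move=> n.
have -> : f n = a ^ n * F n by rewrite /F mulrA -exprzDr // subrr expr0z mul1r.
have -> : F n = F 0 by case: n => k; [apply: HP | rewrite NegzE; apply: HN].
by rewrite /F oppr0 expr0z mul1r.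
Qed.

Lemma geom_int0 (C : fieldType) (f : int -> C) :
  (forall n, f (n + 1) = 0 * f n) -> forall n, f n = 0.
Proof. by move=> Hf n; rewrite -(subrK 1 n) Hf mul0r. Qed.

Theorem lemma3p1 (C : numClosedFieldType) (alpha beta p : C)
  (h g phi phis : int -> int -> C)
  (Hhg : forall n m : int, h n (m + 1) - h (n + 1) m = g (n + 2) m - g n m)
  (Hgg : forall n m : int, (h n m + g (n + 1) m) * g n m = beta ^+ 2 - alpha ^+ 2)
  (Lax1 : forall n m : int,
     phi (n + 2) m + h n m * phi (n + 1) m + alpha ^+ 2 * phi n m = p ^+ 2 * phi n m)
  (Lax2 : forall n m : int, phi n (m + 1) = phi (n + 1) m - g n m * phi n m)
  (Adj1 : forall n m : int,
     phis (n + 2) m - h n m * phis (n + 1) m + alpha ^+ 2 * phis n m = p ^+ 2 * phis n m)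
  (Adj2 : forall n m : int, phis n (m + 1) = phis (n + 1) m + g n m * phis n m) :
  exists rho : C,
    (forall n m : int,
       phi n m * phis (n + 1) m + phis n m * phi (n + 1) m
         = phi n m * phis n (m + 1) + phis n m * phi n (m + 1)
       /\ phi n m * phis n (m + 1) + phis n m * phi n (m + 1)
         = (-1) ^ (n + m) * rho * (alpha ^+ 2 - p ^+ 2) ^ n * (beta ^+ 2 - p ^+ 2) ^ m)
    /\ ((exists c : C, forall n m : int, phis n m = c * ((-1) ^ (n + m) * phi n m)) ->
        rho = 0).
Proof.
pose W n m := phi n m * phis (n + 1) m + phis n m * phi (n + 1) m.
have HV : forall n m, phi n m * phis n (m + 1) + phis n m * phi n (m + 1) = W n m.
  by move=> n m; rewrite /W Lax2 Adj2; ring.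
have L1 : forall n m, phi (n + 1 + 1) m
    = p ^+ 2 * phi n m - h n m * phi (n + 1) m - alpha ^+ 2 * phi n m.
  by move=> n m; rewrite -addrA -(Lax1 n m); ring.
have A1 : forall n m, phis (n + 1 + 1) m
    = p ^+ 2 * phis n m + h n m * phis (n + 1) m - alpha ^+ 2 * phis n m.
  by move=> n m; rewrite -addrA -(Adj1 n m); ring.
set s2 := alpha ^+ 2 - p ^+ 2.
set t2 := beta ^+ 2 - p ^+ 2.
have HW1 : forall n m, W (n + 1) m = - s2 * W n m.
  by move=> n m; rewrite /W L1 A1 /s2; ring.
have HW2 : forall n m, W n (m + 1) = - t2 * W n m.
  move=> n m; rewrite /W !Lax2 !Adj2 L1 A1 /t2.
  have -> : beta ^+ 2 = (h n m + g (n + 1) m) * g n m + alpha ^+ 2.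
    by rewrite Hgg subrK.
  ring.
have Hrho : forall n m, W n m = (-1) ^ (n + m) * W 0 0 * s2 ^ n * t2 ^ m.
  have [s0|s0] := eqVneq s2 0.
    have Z : forall n m, W n m = 0.
      by move=> n m; apply: (@geom_int0 _ (fun n => W n m)) => k;
         rewrite HW1 s0 oppr0.
    by move=> n m; rewrite !Z mulr0 !mul0r.
  have [t0|t0] := eqVneq t2 0.
    have Z : forall n m, W n m = 0.
      by move=> n m; apply: (@geom_int0 _ (fun m => W n m)) => k;
         rewrite HW2 t0 oppr0.
    by move=> n m; rewrite !Z mulr0 !mul0r.
  move=> n m.
  rewrite (@geom_int _ (fun n => W n m) (- s2)) ?oppr_eq0 //.
  rewrite (@geom_int _ (fun m => W 0 m) (- t2)) ?oppr_eq0 //.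
  have um1 : (-1 : C) \is a GRing.unit by rewrite unitrN1.
  rewrite -[- s2]mulN1r -[- t2]mulN1r.
  have n1 : (-1 : C) \is a GRing.unit by [].
  have us : s2 \is a GRing.unit by rewrite unitfE.
  have ut : t2 \is a GRing.unit by rewrite unitfE.
  rewrite (exprzDr um1) (exprzMl _ um1 us) (exprzMl _ um1 ut).
  ring.
pose r := W 0 0.
exists r; split.
  by move=> n m; rewrite HV; split => //; apply: Hrho.
case=> c Hc; rewrite /r /W !Hc !add0r addr0 expr0z expr1z; ring.
Qed.
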